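(* Let $g\ge0$, $n\ge1$, $d\geq 1$ an integer and $S_1,\dots,S_d\subseteq\{1,\dots,n\}$. Let $Ch$ be a chamber such that $\sum_{i\in S_j}a_i<1$ for every $(a_1,\dots,a_n)\in Ch$ and every $j=1,\dots,d$. Let $\mathcal{R}=(r_1,\dots,r_n)$ be a weight datum such that $\sum_{i\in S_j}r_i=1$ for every $j=1,\dots,d$, while for every wall-indexing set $S\neq S_j$ (all $j$), $\mathcal{R}$ belongs to the half-space determined by the hyperplane $\sum_{i\in S}x_i=1$ that contains $Ch$. Then $\mathcal{G}_{g,\mathcal{A}}=\mathcal{G}_{g,\mathcal{R}}$ for every $\mathcal{A}\in Ch$.
   Context: A weight datum is $\mathcal{A}=(a_1,\dots,a_n)$ with $a_i\in\mathbb{Q}\cap(0,1]$ and $2g-2+\sum_i a_i>0$; $\mathcal{D}_{g,n}\subset\mathbb{R}^n$ is the set of weight data. For $S\subseteq\{1,\dots,n\}$ with $2\le|S|\le n$ if $g\ge1$ (resp. $2\le|S|\le n-2$ if $g=0$) (a wall-indexing set), the wall $w_S$ is the locus $\sum_{i\in S}a_i=1$ in $\mathcal{D}_{g,n}$. Chambers are the connected components of the complement in $\mathcal{D}_{g,n}$ of the union of all walls. A $(g,\mathcal{A})$-stable graph is a finite connected graph $G$ (loops and multiple edges allowed) with vertex weight $w:V(G)\to\mathbb{Z}_{\ge0}$ and $n$ legs labelled $1,\dots,n$ attached via $m:\{1,\dots,n\}\to V(G)$, with $b_1(G)+\sum_v w(v)=g$ and $2w(v)-2+|v|_E+|v|_{\mathcal{A}}>0$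 for every vertex $v$, where $|v|_E$ is the number of edge half-edges at $v$ (loops counted twice) and $|v|_{\mathcal{A}}=\sum_{m(i)=v}a_i$. $\mathcal{G}_{g,\mathcal{A}}$ is the category whose objects are $(g,\mathcal{A})$-stable graphs and whose morphisms are compositions of isomorphisms of weighted marked graphs and weighted edge contractions. *)

(* Defs.v *)
From HB Require Import structures.
From mathcomp Require Import all_boot all_order all_algebra.
Set Implicit Arguments. Unset Strict Implicit. Unset Printing Implicit Defensive.
Import Order.TTheory GRing.Theory Num.Theory.
Local Open Scope ring_scope.

Definition weight_datum (g n : nat) (A : 'I_n -> rat) : Prop :=
  (forall i, 0 < A i /\ A i <= 1) /\ 0 < 2 * g%:R - 2 + \sum_(i < n) A i.

Definition wall_indexing (g n : nat) (S : {set 'I_n}) : Prop :=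
  if (1 <= g)%N then (2 <= #|S| <= n)%N else (2 <= #|S| <= n - 2)%N.

Definition wsum n (S : {set 'I_n}) (A : 'I_n -> rat) : rat := \sum_(i in S) A i.

Definition is_chamber (g n : nat) (Ch : ('I_n -> rat) -> Prop) : Prop :=
  (exists A, Ch A) /\
  exists sigma : {set 'I_n} -> bool,
    forall A, Ch A <->
      (weight_datum g A /\
       forall S, wall_indexing g S ->
         if sigma S then wsum S A < 1 else 1 < wsum S A).

(* vertices 'I_nv, edges 'I_ne with (unordered) endpoints [ends e]
   (a loop has both endpoints equal), vertex weights [wt],
   legs 1..n attached via [leg]. *)
Record mgraph (n : nat) := MGraph {
  nv : nat;
  ne : nat;
  ends : 'I_ne -> 'I_nv * 'I_nv;
  wt : 'I_nv -> nat;
  leg : 'I_n -> 'I_nv }.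
Arguments nv {n} m.
Arguments ne {n} m.
Arguments ends {n} m _.
Arguments wt {n} m _.
Arguments leg {n} m _.

Definition adj n (G : mgraph n) : rel 'I_(nv G) :=
  fun u v => [exists e, (ends G e == (u, v)) || (ends G e == (v, u))].

Definition gconnected n (G : mgraph n) : Prop :=
  forall u v : 'I_(nv G), connect (@adj n G) u v.

(* |v|_E : number of edge half-edges at v (loops counted twice) *)
Definition valE n (G : mgraph n) (v : 'I_(nv G)) : nat :=
  #|[set e | (ends G e).1 == v]| + #|[set e | (ends G e).2 == v]|.

Definition legw n (A : 'I_n -> rat) (G : mgraph n) (v : 'I_(nv G)) : rat :=
  \sum_(i < n | leg G i == v) A i.

(* (g,A)-stable graph; b_1(G) = |E| - |V| + 1 for a connected graph *)
Definition stable (g n : nat) (A : 'I_n -> rat) (G : mgraph n) : Prop :=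
  (0 < nv G)%N /\ gconnected G /\
  ((ne G)%:Z - (nv G)%:Z + 1 + (\sum_(v < nv G) wt G v)%:Z = g%:Z)%R /\
  forall v : 'I_(nv G),
    0 < 2 * (wt G v)%:R - 2 + (valE v)%:R + legw A v.

(* ---------- morphisms: weighted edge contractions (incl. isomorphisms) ----------
   f : vertex map (surjective), h : injective map from the edges of H onto the
   non-contracted edges of G; contracted edges lie inside fibres, each fibre
   with its contracted edges is connected, legs are respected, and the weight
   of a vertex y of H is the total weight of its fibre plus the first Betti
   number of the contracted subgraph on the fibre. *)
Definition contracted n (G H : mgraph n) (h : 'I_(ne H) -> 'I_(ne G))
  (e : 'I_(ne G)) : bool := e \notin codom h.

Definition fib_adj n (G H : mgraph n) (f : 'I_(nv G) -> 'I_(nv H))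
  (h : 'I_(ne H) -> 'I_(ne G)) (y : 'I_(nv H)) : rel 'I_(nv G) :=
  fun u v => (f u == y) && (f v == y) &&
    [exists e, contracted h e && ((ends G e == (u, v)) || (ends G e == (v, u)))].

Definition is_contraction n (G H : mgraph n) (f : 'I_(nv G) -> 'I_(nv H))
  (h : 'I_(ne H) -> 'I_(ne G)) : Prop :=
  (forall y, exists x, f x = y) /\
  injective h /\
  (forall e, (f (ends G (h e)).1 = (ends H e).1 /\ f (ends G (h e)).2 = (ends H e).2)
          \/ (f (ends G (h e)).1 = (ends H e).2 /\ f (ends G (h e)).2 = (ends H e).1)) /\
  (forall e, contracted h e -> f (ends G e).1 = f (ends G e).2) /\
  (forall y u v, f u = y -> f v = y -> connect (fib_adj f h y) u v) /\
  (forall i, f (leg G i) = leg H i) /\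
  (forall y, ((wt H y)%:Z =
      (\sum_(x | f x == y) wt G x)%:Z
      + (#|[set e | contracted h e && (f (ends G e).1 == y)]|)%:Z
      - (#|[set x | f x == y]|)%:Z + 1)%R).

Definition hom (g n : nat) (A : 'I_n -> rat) (G H : mgraph n)
  (f : 'I_(nv G) -> 'I_(nv H)) (h : 'I_(ne H) -> 'I_(ne G)) : Prop :=
  stable g A G /\ stable g A H /\ is_contraction f h.

Arguments hom g {n} A G H f h.

Definition same_category (g n : nat) (A B : 'I_n -> rat) : Prop :=
  (forall G : mgraph n, stable g A G <-> stable g B G) /\
  (forall (G H : mgraph n) f h, hom g A G H f h <-> hom g B G H f h).

(* Main.v *)
Require Import Defs.
From HB Require Import structures.
From mathcomp Require Import all_boot all_order all_algebra.
From mathcomp Require Import zify ring lra.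
Import Order.TTheory GRing.Theory Num.Theory.
Local Open Scope ring_scope.


Lemma wsum_ge0 (g n : nat) (X : 'I_n -> rat) (S : {set 'I_n}) : weight_datum g X -> 0 <= wsum S X.
Proof. move=> [H _]; apply: sumr_ge0 => i _; by case: (H i) => /ltW. Qed.

Lemma wsum_pos (g n : nat) (X : 'I_n -> rat) (S : {set 'I_n}) : weight_datum g X -> S != set0 -> 0 < wsum S X.
Proof.
move=> WX /set0Pn [i Hi]; rewrite /wsum (bigD1 i) //=.
have := @wsum_ge0 g n X (S :\ i) WX; rewrite /wsum.
have -> : \sum_(j in S :\ i) X j = \sum_(j in S | j != i) X j.
  by apply: eq_bigl => j; rewrite !inE andbC.
case: WX => H _; case: (H i) => ? _; lra.
Qed.

Lemma wsum_le1 (g n : nat) (X : 'I_n -> rat) (S : {set 'I_n}) : weight_datum g X -> (#|S| <= 1)%N -> wsum S X <= 1.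
Proof.
move=> [H _] c; case: (set_0Vmem S) => [->|[i Hi]].
  by rewrite /wsum big_set0.
have -> : S = [set i].
  apply/eqP; rewrite eq_sym eqEcard sub1set Hi cards1 /=; done.
by rewrite /wsum big_set1; case: (H i).
Qed.

Lemma wsum_big (g n : nat) (X : 'I_n -> rat) (S : {set 'I_n}) : weight_datum 0 X -> (n - 2 < #|S|)%N -> 1 < wsum S X.
Proof.
move=> WX c.
have WX' := WX; case: WX' => _ T.
have e : \sum_(i < n) X i = wsum S X + wsum (~: S) X.
  by rewrite /wsum (bigID (mem S)) /=; congr (_ + _); apply: eq_bigl => i; rewrite !inE.
have : (#|~: S| <= 1)%N by have := cardsC S; rewrite card_ord; lia.
move/(@wsum_le1 0 n X _ WX) => h; rewrite e in T; move: T; lra.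
Qed.

Lemma compare (g n d : nat) (Sj : 'I_d -> {set 'I_n})
  (Ch : ('I_n -> rat) -> Prop) (R A : 'I_n -> rat) :
  is_chamber g Ch -> Ch A ->
  (forall A, Ch A -> forall j, wsum (Sj j) A < 1) ->
  weight_datum g R ->
  (forall j, wsum (Sj j) R = 1) ->
  (forall S, wall_indexing g S -> (forall j, S != Sj j) ->
     forall A, Ch A ->
       (wsum S A < 1 -> wsum S R < 1) /\ (1 < wsum S A -> 1 < wsum S R)) ->
  forall S : {set 'I_n}, (2 <= #|S|)%N -> (1 < wsum S A <-> 1 < wsum S R).
Proof.
move=> [_ [sigma Hs]] ChA HA WR HR Hyp S c2.
have [WA side] := (Hs A).1 ChA.
case: (boolP ((1 <= g)%N || (#|S| <= n-2)%N)) => hw.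
- have wS : wall_indexing g S.
    have := max_card S; rewrite card_ord => mc.
    by rewrite /wall_indexing; case: ifP => g1; move: hw; rewrite g1 /= => h; rewrite c2 ?mc ?h.
  case: (boolP [exists j, S == Sj j]).
    move/existsP=> [j /eqP ->]; have := HA A ChA j; rewrite HR; split => h; lra.
  rewrite negb_exists => /forallP hn.
  have [h1 h2] := Hyp S wS (fun j => hn j) A ChA.
  have := side S wS; case: (sigma S) => hs.
    have := h1 hs; split => h; lra.
  have := h2 hs; split => h; lra.
- have g0 : g = 0%N by move: hw; lia.
  subst g.
  have c : (n - 2 < #|S|)%N by move: hw; rewrite /=; lia.
  by split => _; apply: wsum_big.
Qed.

Lemma graph00 (g n : nat) (G : mgraph n) (v : 'I_(nv G)) :
  gconnected G ->
  ((ne G)%:Z - (nv G)%:Z + 1 + (\sum_(v < nv G) wt G v)%:Z = g%:Z)%R ->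
  wt G v = 0%N -> valE v = 0%N ->
  g = 0%N /\ forall i, leg G i = v.
Proof.
move=> conn Hg wv.
rewrite /valE => /eqP; rewrite addn_eq0 !cards_eq0 => /andP[/eqP h1 /eqP h2].
have noend : forall e, (ends G e).1 != v /\ (ends G e).2 != v.
  move=> e; split.
    have : e \notin [set e | (ends G e).1 == v] by rewrite h1 inE.
    by rewrite inE.
  have : e \notin [set e | (ends G e).2 == v] by rewrite h2 inE.
  by rewrite inE.
have allv : forall u, u = v.
  move=> u; have /connectP [p pth ->] := conn v u.
  case: p pth => [|x p] //= /andP [a _].
  move: a; rewrite /adj => /existsP [e /orP [] /eqP E];
   have [k1 k2] := noend e; rewrite E /= in k1 k2.
    by rewrite eqxx in k1.
  by rewrite eqxx in k2.
have ne0 : ne G = 0%N.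
  case: (posnP (ne G)) => // hp.
  have [k1 _] := noend (Ordinal hp).
  by rewrite (allv (ends G _).1) eqxx in k1.
have nv1 : nv G = 1%N.
  have h0 : (0 < nv G)%N := leq_ltn_trans (leq0n v) (ltn_ord v).
  case: (leqP (nv G) 1) => h3; first lia.
  have := congr1 val (etrans (allv (Ordinal h3)) (esym (allv (Ordinal h0)))).
  by [].
have sw : (\sum_(u < nv G) wt G u = 0)%N.
  rewrite (bigD1 v) //= big1 ?addn0 // => u; by rewrite (allv u) eqxx.
split; last by move=> i; exact: allv.
move: Hg; rewrite sw ne0 nv1; lia.
Qed.

Lemma vertex (g n : nat) (A R : 'I_n -> rat) (G : mgraph n) (v : 'I_(nv G)) :
  weight_datum g A -> weight_datum g R ->
  (forall S : {set 'I_n}, (2 <= #|S|)%N -> (1 < wsum S A <-> 1 < wsum S R)) ->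
  gconnected G ->
  ((ne G)%:Z - (nv G)%:Z + 1 + (\sum_(v < nv G) wt G v)%:Z = g%:Z)%R ->
  (0 < 2 * (wt G v)%:R - 2 + (valE v)%:R + legw A v) <->
  (0 < 2 * (wt G v)%:R - 2 + (valE v)%:R + legw R v).
Proof.
move=> WA WR cmp conn Hg.
set S := [set i | leg G i == v].
have LS : forall X, legw X v = wsum S X.
  by move=> X; rewrite /legw /wsum; apply: eq_bigl => i; rewrite inE.
rewrite !LS.
have : (3 <= 2 * wt G v + valE v)%N \/ (wt G v = 0 /\ valE v = 0)%N \/
  (wt G v = 0 /\ valE v = 1)%N \/ (wt G v = 0 /\ valE v = 2)%N \/
  (wt G v = 1 /\ valE v = 0)%N by lia.
case=> [h|[[hw hk]|[[hw hk]|[[hw hk]|[hw hk]]]]].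
- have : (3%:R <= (2 * wt G v + valE v)%:R :> rat) by rewrite ler_nat.
  rewrite natrD natrM => h'.
  have := @wsum_ge0 g n A S WA; have := @wsum_ge0 g n R S WR.
  split => _; lra.
- have [g0 lv] := @graph00 g n G v conn Hg hw hk. subst g.
  have tot : forall X, wsum S X = \sum_(i < n) X i.
    by move=> X; rewrite /wsum; apply: eq_bigl => i; rewrite inE lv eqxx.
  rewrite !tot hw hk; case: WA => _; case: WR => _.
  rewrite /= !mulr0n; split => _; lra.
- rewrite hw hk /= mulr0n; case: (leqP #|S| 1) => c.
    have := @wsum_le1 g n A S WA c; have := @wsum_le1 g n R S WR c.
    split => h; lra.
  have := cmp S c; move=> [c1 c2]; split => h.
    have := c1 ltac:(lra); lra.
  have := c2 ltac:(lra); lra.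
- rewrite hw hk /= mulr0n; case: (eqVneq S set0) => c.
    rewrite c /wsum !big_set0; split => h; lra.
  have := @wsum_pos g n A S WA c; have := @wsum_pos g n R S WR c.
  split => _; lra.
- rewrite hw hk /= mulr0n; case: (eqVneq S set0) => c.
    rewrite c /wsum !big_set0; split => h; lra.
  have := @wsum_pos g n A S WA c; have := @wsum_pos g n R S WR c.
  split => _; lra.
Qed.

Theorem mainTheorem3 (g n d : nat) (Sj : 'I_d -> {set 'I_n})
  (Ch : ('I_n -> rat) -> Prop) (R : 'I_n -> rat) :
  (1 <= n)%N -> (1 <= d)%N ->
  is_chamber g Ch ->
  (forall A, Ch A -> forall j, wsum (Sj j) A < 1) ->
  weight_datum g R ->
  (forall j, wsum (Sj j) R = 1) ->
  (forall S, wall_indexing g S -> (forall j, S != Sj j) ->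
     forall A, Ch A ->
       (wsum S A < 1 -> wsum S R < 1) /\ (1 < wsum S A -> 1 < wsum S R)) ->
  forall A, Ch A -> same_category g A R.
Proof.
move=> _ _ HC HA WR HR Hyp A ChA.
have cmp := @compare g n d Sj Ch R A HC ChA HA WR HR Hyp.
have WA : weight_datum g A by case: HC => _ [sigma Hs]; case: ((Hs A).1 ChA).
have st : forall G : mgraph n, stable g A G <-> stable g R G.
  move=> G; rewrite /stable; split => [[h1 [h2 [h3 h4]]]|[h1 [h2 [h3 h4]]]];
    (do !split => //) => v; by apply/(@vertex g n A R G v WA WR cmp h2 h3).
split => // G H f h; rewrite /Defs.hom; have := st G; have := st H; tauto.
Qed.
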